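(* Let $R$ be a ring such that the right module $R_R$ is self-similar. Then $R_R$ is quasi-pseudo principally injective if and only if $R_R$ is semisimple.
   Context: All rings are associative with identity and all modules are unitary right $R$-modules. A submodule $N$ of $M$ is called $M$-cyclic if $N\cong M/L$ for some submodule $L$ of $M$ (equivalently, $N$ is the image of an endomorphism of $M$). $M$ is quasi-pseudo principally injective if for every $M$-cyclic submodule $A$ of $M$, every $R$-monomorphism $A\to M$ extends to an $R$-endomorphism of $M$. A module $M$ is self-similar if every nonzero submodule of $M$ is isomorphic to $M$. A module is semisimple if every submodule is a direct summand. *)

(* Defs.v *)
(* We work with the right regular module R_R of a ring R
   (possibly noncommutative, identity possibly equal to 0: pzRingType).
   Submodules of R_R are right ideals, represented as predicates R -> Prop. *)
From HB Require Import structures.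
From mathcomp Require Import all_boot all_order all_algebra.
Set Implicit Arguments. Unset Strict Implicit. Unset Printing Implicit Defensive.
Import GRing.Theory.
Local Open Scope ring_scope.

Definition is_submod (R : pzRingType) (N : R -> Prop) : Prop :=
  [/\ N 0, (forall x y, N x -> N y -> N (x + y)) & (forall x r, N x -> N (x * r))].

Definition hom_on (R : pzRingType) (A : R -> Prop) (f : R -> R) : Prop :=
  (forall x y, A x -> A y -> f (x + y) = f x + f y) /\
  (forall x r, A x -> f (x * r) = f x * r).

Definition is_endo (R : pzRingType) (f : R -> R) : Prop := hom_on (fun _ => True) f.

Definition image_is (R : pzRingType) (f : R -> R) (N : R -> Prop) : Prop :=
  forall y, N y <-> exists x, f x = y.

Definition Mcyclic (R : pzRingType) (A : R -> Prop) : Prop :=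
  is_submod A /\ exists f : R -> R, is_endo f /\ image_is f A.

Definition qppi (R : pzRingType) : Prop :=
  forall A : R -> Prop, Mcyclic A ->
  forall g : R -> R, hom_on A g ->
    (forall x y, A x -> A y -> g x = g y -> x = y) ->
    exists h : R -> R, is_endo h /\ forall x, A x -> h x = g x.

Definition iso_to_RR (R : pzRingType) (N : R -> Prop) : Prop :=
  exists f : R -> R, [/\ is_endo f, injective f & image_is f N].

Definition self_similar (R : pzRingType) : Prop :=
  forall N : R -> Prop, is_submod N -> (exists x, N x /\ x <> 0) -> iso_to_RR N.

Definition semisimple (R : pzRingType) : Prop :=
  forall N : R -> Prop, is_submod N ->
  exists K : R -> Prop, [/\ is_submod K,
     (forall x, N x -> K x -> x = 0) &
     (forall z, exists x y, [/\ N x, K y & z = x + y])].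

(* Main.v *)
Require Import Defs.
From mathcomp Require Import all_boot all_order all_algebra.
From Stdlib Require Import Classical ClassicalEpsilon.
Import GRing.Theory.
Local Open Scope ring_scope.

Lemma submodN (R : pzRingType) (N : R -> Prop) x : is_submod N -> N x -> N (- x).
Proof. by case=> _ _ HM Nx; rewrite -mulrN1; apply: HM. Qed.

Lemma submodB (R : pzRingType) (N : R -> Prop) x y : is_submod N -> N x -> N y -> N (x - y).
Proof. move=> H Nx Ny; case: (H) => _ HD _; apply: HD => //; exact: submodN. Qed.

Lemma uniq_dec {R : pzRingType} {A K : R -> Prop} {x x' z : R} :
  is_submod A -> is_submod K -> (forall t, A t -> K t -> t = 0) ->
  A x -> A x' -> K (z - x) -> K (z - x') -> x = x'.
Proof.
move=> HA HK H0 Ax Ax' Kx Kx'.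
apply/eqP; rewrite -subr_eq0; apply/eqP; apply: H0; first exact: submodB.
have -> : x - x' = (z - x') - (z - x).
  by rewrite opprB [RHS]addrC addrA subrK.
exact: submodB.
Qed.

Lemma ss_qppi (R : pzRingType) : semisimple R -> qppi R.
Proof.
move=> Hss A [HA _] g [gD gM] _.
have [K [HK H0 Hdec]] := Hss A HA.
pose p z := epsilon (inhabits 0) (fun x => A x /\ K (z - x)).
have pP : forall z, A (p z) /\ K (z - p z).
  move=> z; apply: (epsilon_spec (inhabits 0) (fun x => A x /\ K (z - x))).
  have [x [y [Ax Ky ->]]] := Hdec z; exists x; split => //.
  by rewrite [x + y]addrC addrK.
have pU : forall z x, A x -> K (z - x) -> p z = x.
  move=> z x Ax Kx; have [Ap Kp] := pP z; exact: (uniq_dec HA HK H0 Ap Ax Kp Kx).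
exists (fun z => g (p z)); split; last first.
  move=> x Ax; rewrite (pU x x Ax) // subrr; by case: HK.
split.
- move=> z1 z2 _ _.
  have [A1 K1] := pP z1; have [A2 K2] := pP z2.
  rewrite (pU (z1 + z2) (p z1 + p z2)); first exact: gD.
    by case: HA => _ HD _; apply: HD.
  have -> : z1 + z2 - (p z1 + p z2) = (z1 - p z1) + (z2 - p z2).
    by rewrite opprD addrACA.
  by case: HK => _ HD _; apply: HD.
- move=> z r _.
  have [A1 K1] := pP z.
  rewrite (pU (z * r) (p z * r)); first exact: gM.
    by case: HA => _ _ HM; apply: HM.
  by rewrite -mulrBl; case: HK => _ _ HM; apply: HM.
Qed.

Lemma qppi_ss (R : pzRingType) : self_similar R -> qppi R -> semisimple R.
Proof.
move=> Hsim Hq N HN.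
case: (classic (exists x, N x /\ x <> 0)) => Hnz; last first.
  exists (fun _ => True); split.
  - by split.
  - move=> x Nx _; apply: NNPP => Hx; apply: Hnz; by exists x.
  - move=> z; exists 0, z; split => //; [by case: HN | by rewrite add0r].
have [f [[_ fM] finj fim]] := Hsim N HN Hnz.
pose a := f 1.
have fE : forall x, f x = a * x by move=> x; rewrite -[in LHS](mul1r x) fM.
have ainj : forall x y, a * x = a * y -> x = y.
  by move=> x y; rewrite -!fE; apply: finj.
have Nim : forall y, N y <-> exists x, a * x = y.
  move=> y; rewrite fim; split=> [[x <-]|[x <-]]; exists x => //; by rewrite fE.
pose g y := epsilon (inhabits 0) (fun x => a * x = y).
have gP : forall y, N y -> a * g y = y.
  move=> y /Nim Hy; exact: (epsilon_spec (inhabits 0) (fun x => a * x = y) Hy).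
have gax : forall x, g (a * x) = x.
  move=> x; apply: ainj; apply: gP; apply/Nim; by exists x.
have HM : Mcyclic N.
  split => //; exists (fun x => a * x); split.
  - split=> [x y _ _|x r _]; [by rewrite mulrDr | by rewrite mulrA].
  - move=> y; exact: Nim.
have ghom : hom_on N g.
  split.
  + move=> x y Nx Ny; apply: ainj; rewrite mulrDr !gP //.
    by case: HN => _ HD _; apply: HD.
  + move=> x r Nx; apply: ainj; rewrite mulrA !gP //.
    by case: HN => _ _ HM'; apply: HM'.
have ginj : forall x y, N x -> N y -> g x = g y -> x = y.
  by move=> x y Nx Ny E; rewrite -(gP x Nx) -(gP y Ny) E.
have [h [[_ hM] hE]] := Hq N HM g ghom ginj.
pose b := h 1.
have hE' : forall x, h x = b * x by move=> x; rewrite -[in LHS](mul1r x) hM.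
have ba : b * a = 1.
  have Na : N a by apply/Nim; exists 1; rewrite mulr1.
  by rewrite -hE' hE // -[a]mulr1 gax.
pose e := a * b.
have ee : e * e = e by rewrite /e mulrA -(mulrA a b a) ba mulr1.
exists (fun y => e * y = 0); split.
- split.
  + by rewrite mulr0.
  + by move=> x y Hx Hy; rewrite mulrDr Hx Hy addr0.
  + by move=> x r Hx; rewrite mulrA Hx mul0r.
- move=> x /Nim [t <-]; rewrite /e -mulrA (mulrA b a t) ba mul1r => ->.
  by [].
- move=> z; exists (e * z), (z - e * z); split.
  + apply/Nim; exists (b * z); by rewrite mulrA.
  + by rewrite mulrBr mulrA ee subrr.
  + by rewrite addrC subrK.
Qed.

Theorem corollary2p5 (R : pzRingType) :
  self_similar R -> (qppi R <-> semisimple R).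
Proof.
move=> Hs; split; [exact: qppi_ss | exact: ss_qppi].
Qed.
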